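(* Let $p\in K$, let $M$ be a PPV-extension of $K$ for $\delta^2Y-p\,\delta Y=0$, let $\eta\in M$ with $\delta^2\eta=p\,\delta\eta$ and $\delta\eta\neq0$, and let $L:=K\langle\delta\eta\rangle_\Delta$. Then $\delta\eta$ is not $\partial$-transcendental over $K$; consequently $L$ is finitely generated as a field over $K$ (it has finite transcendence degree over $K$).
   Context: All fields have characteristic zero. $F$ is a differentially closed $\partial$-field (every system of polynomial differential equations over $F$ having a solution in some $\partial$-field extension has one in $F$). $K:=F(x)$ with commuting derivations $\delta,\partial$ given by $\delta x=1$, $\partial x=0$, $\delta|_F=0$; $K^\delta=F$. For a $\Delta$-field extension $M$ of $K$ ($\Delta=\{\delta,\partial\}$) and $y\in M$, $K\langle y\rangle_\Delta$ denotes the $\Delta$-subfield generated over $K$ by all iterated derivatives of $y$. $y$ is $\partial$-transcendental over $K$ if $y,\partial y,\partial^2 y,\dots$ are algebraically independent over $K$. A PPV-extension of $K$ for $\delta^2Y-p\delta Y=0$ is a $\Delta$-field extension $M\supseteq K$ containing two $K^\delta$-linearly independent solutions, generated as a $\Delta$-field over $K$ by them, and with $M^\delta=K^\delta$. *)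

(* Defs.v *)
From HB Require Import structures.
From mathcomp Require Import all_boot all_order all_algebra.
Set Implicit Arguments. Unset Strict Implicit. Unset Printing Implicit Defensive.
Import Order.TTheory GRing.Theory Num.Theory.
Local Open Scope ring_scope.

Definition is_derivation (R : nzRingType) (d : R -> R) : Prop :=
  (forall a b, d (a + b) = d a + d b) /\ (forall a b, d (a * b) = d a * b + a * d b).

Inductive gen_field (M : fieldType) (S : M -> Prop) : M -> Prop :=
| gf_base a : S a -> gen_field S a
| gf_one : gen_field S 1
| gf_add a b : gen_field S a -> gen_field S b -> gen_field S (a + b)
| gf_opp a : gen_field S a -> gen_field S (- a)
| gf_mul a b : gen_field S a -> gen_field S b -> gen_field S (a * b)
| gf_inv a : gen_field S a -> gen_field S (a^-1).

Inductive gen_dfield (M : fieldType) (d1 d2 : M -> M) (S : M -> Prop) : M -> Prop :=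
| gd_base a : S a -> gen_dfield d1 d2 S a
| gd_one : gen_dfield d1 d2 S 1
| gd_add a b : gen_dfield d1 d2 S a -> gen_dfield d1 d2 S b -> gen_dfield d1 d2 S (a + b)
| gd_opp a : gen_dfield d1 d2 S a -> gen_dfield d1 d2 S (- a)
| gd_mul a b : gen_dfield d1 d2 S a -> gen_dfield d1 d2 S b -> gen_dfield d1 d2 S (a * b)
| gd_inv a : gen_dfield d1 d2 S a -> gen_dfield d1 d2 S (a^-1)
| gd_d1 a : gen_dfield d1 d2 S a -> gen_dfield d1 d2 S (d1 a)
| gd_d2 a : gen_dfield d1 d2 S a -> gen_dfield d1 d2 S (d2 a).

(* Algebraic independence of the finite family v over the subfield K of M:
   every polynomial with coefficients in K, written as a list of
   (coefficient, exponent vector) pairs with pairwise distinct exponent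
   vectors, that vanishes at v has all coefficients zero. *)
Definition monomial (M : fieldType) (v : seq M) (e : seq nat) : M :=
  \prod_(j < size v) v`_j ^+ (nth 0%N e j).

Definition alg_indep (M : fieldType) (K : M -> Prop) (v : seq M) : Prop :=
  forall P : seq (M * seq nat),
    (forall m, m \in P -> K m.1 /\ size m.2 = size v) ->
    uniq (map snd P) ->
    \sum_(m <- P) m.1 * monomial v m.2 = 0 ->
    forall m, m \in P -> m.1 = 0.

Definition d_transcendental (M : fieldType) (d : M -> M) (K : M -> Prop) (u : M) : Prop :=
  forall n : nat, alg_indep K [seq iter k d u | k <- iota 0 n.+1].

Fixpoint map_term (R S : nzRingType) (f : R -> S) (t : GRing.term R) : GRing.term S :=
  match t with
  | GRing.Var i => GRing.Var _ i
  | GRing.Const c => GRing.Const (f c)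
  | GRing.NatConst n => GRing.NatConst _ n
  | GRing.Add t1 t2 => GRing.Add (map_term f t1) (map_term f t2)
  | GRing.Opp t1 => GRing.Opp (map_term f t1)
  | GRing.NatMul t1 n => GRing.NatMul (map_term f t1) n
  | GRing.Mul t1 t2 => GRing.Mul (map_term f t1) (map_term f t2)
  | GRing.Inv t1 => GRing.Inv (map_term f t1)
  | GRing.Exp t1 n => GRing.Exp (map_term f t1) n
  end.

(* Differential environment: for n unknowns ys and order bound r, the
   variable 'X_k (k < n*(r+1)) stands for d^(k %/ n) (ys_(k %% n)). *)
Definition denv (R : nzRingType) (d : R -> R) (n r : nat) (ys : seq R) : seq R :=
  [seq iter (k %/ n) d (nth 0 ys (k %% n)) | k <- iota 0 (n * r.+1)].

Definition diff_closed (F : fieldType) (dF : F -> F) : Prop :=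
  forall (n r : nat) (S : seq (GRing.term F)),
    all (@GRing.rterm F) S ->
    (exists (E : fieldType) (dE : E -> E) (f : {rmorphism F -> E}) (ys : seq E),
        [/\ is_derivation dE, (forall a, dE (f a) = f (dF a)), size ys = n &
            all (fun t => GRing.eval (denv dE n r ys) (map_term f t) == 0) S]) ->
    exists ys : seq F, size ys = n /\
      all (fun t => GRing.eval (denv dF n r ys) t == 0) S.

(* Submission.v *)
Require Import Defs.
From HB Require Import structures.
From mathcomp Require Import all_boot all_order all_algebra.
From mathcomp.algebra_tactics Require Import ring.
From mathcomp Require Import zify.
From Stdlib Require Import Classical ClassicalEpsilon.
Set Implicit Arguments. Unset Strict Implicit. Unset Printing Implicit Defensive.
Import GRing.Theory.
Local Open Scope ring_scope.

Section Deriv.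
Variable M : fieldType.
Variable d : M -> M.
Hypothesis hd : is_derivation d.

Lemma dD a b : d (a + b) = d a + d b. Proof. exact: hd.1. Qed.
Lemma dM a b : d (a * b) = d a * b + a * d b. Proof. exact: hd.2. Qed.
Lemma d0 : d 0 = 0.
Proof. have H := dD 0 0; rewrite addr0 in H.
have : d 0 + d 0 - d 0 = d 0 - d 0 by rewrite -H. by rewrite addrK subrr. Qed.
Lemma dN a : d (- a) = - d a.
Proof. apply/eqP; rewrite -subr_eq0 opprK -dD addNr d0 //. Qed.
Lemma dB a b : d (a - b) = d a - d b. Proof. by rewrite dD dN. Qed.
Lemma d1 : d 1 = 0.
Proof. have H := dM 1 1; rewrite !mul1r mulr1 in H.
have : d 1 + d 1 - d 1 = d 1 - d 1 by rewrite -H. by rewrite addrK subrr. Qed.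
Lemma dnat n : d n%:R = 0.
Proof. elim: n => [|n IH]; first by rewrite d0. by rewrite -addn1 natrD dD IH d1 addr0. Qed.
Lemma dX a n : d (a ^+ n.+1) = n.+1%:R * a ^+ n * d a.
Proof.
elim: n => [|n IH]; first by rewrite expr1 expr0 mulr1 mul1r.
rewrite exprS dM IH exprS. rewrite -[n.+2]addn1 natrD. ring.
Qed.
Lemma dV a : d (a^-1) = - d a * (a^-1 * a^-1).
Proof.
have [->|a0] := eqVneq a 0; first by rewrite invr0 d0 !mulr0.
have H := dM a a^-1; rewrite divff // d1 in H.
have -> : d a^-1 = a^-1 * (a * d a^-1) by rewrite mulrA mulVf // mul1r.
have -> : a * d a^-1 = - (d a * a^-1) by apply/eqP; rewrite -addr_eq0 addrC -H.
field; exact a0.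
Qed.
Lemma dsum (I : Type) (r : seq I) (P : pred I) (f : I -> M) :
  d (\sum_(i <- r | P i) f i) = \sum_(i <- r | P i) d (f i).
Proof.
elim: r => [|i r IH]; first by rewrite !big_nil d0.
rewrite !big_cons; case: (P i); by rewrite ?dD IH.
Qed.
End Deriv.

Lemma dquot (M : fieldType) (d : M -> M) (hd : is_derivation d) (A B : M) n :
  B != 0 -> d (A / B ^+ n.+1) = (d A * B - n.+1%:R * A * d B) / B ^+ n.+2.
Proof.
move=> B0; rewrite (dM hd) (dV hd) (dX hd).
have Bn : B ^+ n != 0 by rewrite expf_neq0.
rewrite !exprS; move: (B ^+ n) Bn => C C0.
field; by rewrite ?C0 ?B0.
Qed.

Lemma dnatV (M : fieldType) (d : M -> M) (hd : is_derivation d) n : d (n%:R^-1) = 0.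
Proof. by rewrite (dV hd) (dnat hd) oppr0 mul0r. Qed.

Lemma diter (M : fieldType) (d1 d2 : M -> M) (comm : forall a, d1 (d2 a) = d2 (d1 a)) k a :
  d1 (iter k d2 a) = iter k d2 (d1 a).
Proof. by elim: k => [|k IH] //=; rewrite comm IH. Qed.


Section Gen.
Variable M : fieldType.

Lemma gf0 (S : M -> Prop) : gen_field S 0.
Proof. rewrite -(subrr (1:M)); apply: gf_add; [exact: gf_one| apply: gf_opp; exact: gf_one]. Qed.

Lemma gf_mono (S T : M -> Prop) : (forall a, S a -> T a) -> forall a, gen_field S a -> gen_field T a.
Proof. move=> ST a; elim=> *; by [apply: gf_base; apply: ST|constructor]. Qed.

Lemma gf_natr (S : M -> Prop) n : gen_field S n%:R.
Proof. elim: n => [|n IH]; first exact: gf0. rewrite -addn1 natrD; apply: gf_add => //; exact: gf_one. Qed.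

Lemma gf_sub (S : M -> Prop) a b : gen_field S a -> gen_field S b -> gen_field S (a - b).
Proof. by move=> ha hb; apply: gf_add => //; apply: gf_opp. Qed.

Lemma gf_div (S : M -> Prop) a b : gen_field S a -> gen_field S b -> gen_field S (a / b).
Proof. by move=> ha hb; apply: gf_mul => //; apply: gf_inv. Qed.

Lemma gf_exp (S : M -> Prop) a n : gen_field S a -> gen_field S (a ^+ n).
Proof. move=> ha; elim: n => [|n IH]; first exact: gf_one. by rewrite exprS; apply: gf_mul. Qed.

Lemma gf_sum (S : M -> Prop) (I : Type) (r : seq I) (P : pred I) (f : I -> M) :
  (forall i, P i -> gen_field S (f i)) -> gen_field S (\sum_(i <- r | P i) f i).
Proof. move=> H; apply: big_ind => //; [exact: gf0| exact: gf_add]. Qed.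

Lemma gf_d (d : M -> M) (hd : is_derivation d) (S : M -> Prop) :
  (forall a, S a -> gen_field S (d a)) -> forall a, gen_field S a -> gen_field S (d a).
Proof.
move=> HS a; elim=> {a}.
- exact: HS.
- rewrite d1 //; exact: gf0.
- by move=> a b _ ha _ hb; rewrite dD //; apply: gf_add.
- by move=> a _ ha; rewrite dN //; apply: gf_opp.
- move=> a b Ga ha Gb hb; rewrite dM //; apply: gf_add; exact: gf_mul.
- move=> a Ga ha; rewrite dV //; apply: gf_mul; first exact: gf_opp.
  apply: gf_mul; exact: gf_inv.
Qed.

Inductive polyin (K S : M -> Prop) : M -> Prop :=
| pk a : K a -> polyin K S a
| pv a : S a -> polyin K S a
| padd a b : polyin K S a -> polyin K S b -> polyin K S (a + b)
| pmul a b : polyin K S a -> polyin K S b -> polyin K S (a * b).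

Lemma polyin_mono (K S T : M -> Prop) : (forall a, S a -> T a) -> forall a, polyin K S a -> polyin K T a.
Proof. move=> ST a; elim=> *; by [apply: pk|apply: pv; apply: ST|constructor]. Qed.

Lemma polyin_sum (K S : M -> Prop) (I : Type) (r : seq I) (P : pred I) (f : I -> M) :
  K 0 -> (forall i, P i -> polyin K S (f i)) -> polyin K S (\sum_(i <- r | P i) f i).
Proof. move=> K0 H; apply: big_ind => //; [exact: pk| exact: padd]. Qed.

Lemma polyin_exp (K S : M -> Prop) a n : K 1 -> polyin K S a -> polyin K S (a ^+ n).
Proof. move=> K1 ha; elim: n => [|n IH]; first exact: pk. by rewrite exprS; apply: pmul. Qed.

Lemma polyin_d (d : M -> M) (hd : is_derivation d) (K S T : M -> Prop) :
  (forall a, K a -> K (d a)) -> (forall a, S a -> polyin K T (d a)) -> (forall a, S a -> T a) ->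
  forall a, polyin K S a -> polyin K T (d a).
Proof.
move=> Kd Sd ST a; elim=> {a}.
- by move=> a Ka; apply: pk; apply: Kd.
- exact: Sd.
- by move=> a b _ ha _ hb; rewrite dD //; apply: padd.
- move=> a b Ga ha Gb hb; rewrite dM //; apply: padd; apply: pmul => //;
  exact: (polyin_mono ST).
Qed.

Lemma polyin_gf (K S : M -> Prop) (T : M -> Prop) :
  (forall a, K a -> gen_field T a) -> (forall a, S a -> gen_field T a) ->
  forall a, polyin K S a -> gen_field T a.
Proof. move=> HK HS a; elim=> *; by [apply: HK|apply: HS|apply: gf_add|apply: gf_mul]. Qed.

End Gen.


Section Mono.
Variable M : fieldType.

Lemma monomialE (v : seq M) e : monomial v e = \prod_(0 <= j < size v) v`_j ^+ (nth 0%N e j).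
Proof. by rewrite /monomial big_mkord. Qed.

Lemma monomial_rcons (v : seq M) t e j : size e = size v ->
  monomial (rcons v t) (rcons e j) = monomial v e * t ^+ j.
Proof.
move=> se; rewrite !monomialE size_rcons big_nat_recr //= nth_rcons ltnn eqxx.
rewrite nth_rcons se ltnn eqxx; congr (_ * _).
apply: eq_big_nat => i /andP[_ hi]; by rewrite !nth_rcons hi se hi.
Qed.

Lemma monomial0 (v : seq M) : monomial v (nseq (size v) 0%N) = 1.
Proof.
rewrite monomialE; apply: big1_seq => i; rewrite mem_iota => /andP[_ hi].
by rewrite nth_nseq; case: ifP.
Qed.

Lemma monomial_var (v : seq M) j : (j < size v)%N ->
  monomial v [seq nat_of_bool (i == j) | i <- iota 0 (size v)] = v`_j.
Proof.
move=> hj; rewrite monomialE (big_cat_nat _ (n := j)) //= ?(ltnW hj) //.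
rewrite [X in _ * X]big_ltn // (nth_map 0%N) ?size_iota //.
rewrite nth_iota // add0n eqxx expr1.
rewrite big1_seq ?mul1r; last first.
  move=> i; rewrite mem_iota add0n subn0 => /andP[_ /andP[_ hi]].
  have hiv := ltn_trans hi hj.
  rewrite (nth_map 0%N) ?size_iota // nth_iota //.
  by rewrite add0n (ltn_eqF hi) expr0.
rewrite big1_seq ?mulr1 // => i; rewrite mem_iota => /andP[_ /andP[hi1 hi2]].
rewrite subnKC in hi2; last exact: hj.
rewrite (nth_map 0%N) ?size_iota // nth_iota // add0n.
by rewrite (gtn_eqF hi1) expr0.
Qed.

Lemma monomial_add (v : seq M) e1 e2 :
  monomial v [seq (nth 0 e1 i + nth 0 e2 i)%N | i <- iota 0 (size v)] =
  monomial v e1 * monomial v e2.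
Proof.
rewrite !monomialE -big_split /=; apply: eq_big_nat => i /andP[_ hi].
by rewrite (nth_map 0%N) ?size_iota // nth_iota // add0n exprD.
Qed.

Lemma polyin_list (K S : M -> Prop) (v : seq M) :
  K 1 -> (forall a b, K a -> K b -> K (a * b)) -> (forall s, S s -> s \in v) ->
  forall z, polyin K S z -> exists P : seq (M * seq nat),
    (forall m, m \in P -> K m.1 /\ size m.2 = size v) /\
    z = \sum_(m <- P) m.1 * monomial v m.2.
Proof.
move=> K1 KM Sv z; elim=> {z}.
- move=> a Ka; exists [:: (a, nseq (size v) 0%N)]; split.
    by move=> m; rewrite inE => /eqP -> /=; rewrite size_nseq.
  by rewrite big_seq1 /= monomial0 mulr1.
- move=> a /Sv av; exists [:: (1, [seq nat_of_bool (i == index a v) | i <- iota 0 (size v)])]; split.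
    by move=> m; rewrite inE => /eqP -> /=; rewrite size_map size_iota.
  by rewrite big_seq1 /= monomial_var ?index_mem // nth_index // mul1r.
- move=> a b _ [P1 [h1 ->]] _ [P2 [h2 ->]]; exists (P1 ++ P2); split; last by rewrite big_cat.
  by move=> m; rewrite mem_cat => /orP[/h1|/h2].
- move=> a b _ [P1 [h1 ->]] _ [P2 [h2 ->]].
  exists [seq (m1.1 * m2.1, [seq (nth 0 m1.2 i + nth 0 m2.2 i)%N | i <- iota 0 (size v)]) | m1 <- P1, m2 <- P2].
  split.
    move=> m /allpairsP [[m1 m2] [/= hm1 hm2 ->]] /=; split.
      by apply: KM; [exact: (h1 _ hm1).1 | exact: (h2 _ hm2).1].
    by rewrite size_map size_iota.
  rewrite big_allpairs_dep /= mulr_suml; apply: eq_bigr => m1 _.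
  rewrite mulr_sumr; apply: eq_bigr => m2 _; rewrite monomial_add; ring.
Qed.

Lemma big_pred1_useq (T : eqType) (r : seq T) x (F : T -> M) :
  uniq r -> x \in r -> \sum_(j <- r | j == x) F j = F x.
Proof.
move=> ur xr; rewrite (big_rem x) //= eqxx big_hasC ?addr0 //.
apply/hasPn => j jr; apply/negP => /eqP ejx.
by move: jr; rewrite ejx mem_rem_uniqF.
Qed.

Lemma alg_indep_coef (K : M -> Prop) (v : seq M) :
  K 0 -> (forall a b, K a -> K b -> K (a + b)) -> alg_indep K v ->
  forall P : seq (M * seq nat), (forall m, m \in P -> K m.1 /\ size m.2 = size v) ->
  \sum_(m <- P) m.1 * monomial v m.2 = 0 ->
  forall e, \sum_(m <- P | m.2 == e) m.1 = 0.
Proof.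
move=> K0 KD ind P hP s0 e.
set E := undup (map snd P).
set P' := [seq (\sum_(m <- P | m.2 == f) m.1, f) | f <- E].
have hP' : forall m, m \in P' -> K m.1 /\ size m.2 = size v.
  move=> m /mapP [f fE ->] /=; split.
    rewrite big_seq_cond; apply: big_ind => // m' /andP[m'P _]; exact: (hP m' m'P).1.
  by move: fE; rewrite mem_undup => /mapP [m' m'P ->]; exact: (hP m' m'P).2.
have uP' : uniq (map snd P').
  by rewrite -map_comp /= map_id_in ?undup_uniq //.
have sP' : \sum_(m <- P') m.1 * monomial v m.2 = 0.
  rewrite big_map /= -[in RHS]s0.
  transitivity (\sum_(f <- E) \sum_(m <- P | m.2 == f) m.1 * monomial v m.2).
    by apply: eq_bigr => f _; rewrite mulr_suml; apply: eq_bigr => m /eqP ->.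
  rewrite (exchange_big_dep xpredT) //=.
  apply: eq_big_seq => m mP.
  under eq_bigl do rewrite eq_sym.
  rewrite big_pred1_useq ?undup_uniq // mem_undup; apply/mapP; by exists m.
have [eE|neE] := boolP (e \in E).
  have := ind P' hP' uP' sP' (\sum_(m <- P | m.2 == e) m.1, e).
  by apply; apply/mapP; exists e.
rewrite big_hasC //; apply/hasPn => m mP; apply/negP => /eqP me.
by move: neE; rewrite mem_undup -me; apply/negP/negPn/mapP; exists m.
Qed.

End Mono.


Section Sqf.
Variable F : fieldType.
Hypothesis charF : [pchar F] =i pred0.

Lemma deriv_neq0 (P : {poly F}) : (1 < size P)%N -> P^`() != 0.
Proof.
move=> sP; apply/negP => /eqP h; have := congr1 (fun q : {poly F} => q`_(size P).-2) h.
rewrite coef_deriv coef0 -mulr_natr => /eqP; rewrite mulf_eq0; apply/negP; rewrite negb_or.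
have -> : (size P).-2.+1 = (size P).-1 by case: (size P) sP => [|[|n]].
rewrite -/(lead_coef P) lead_coef_eq0 -size_poly_gt0 (ltn_trans _ sP) //=.
move: charF => /pcharf0P ->; by case: (size P) sP => [|[|n]].
Qed.

Lemma irr_factor : forall b : {poly F}, (1 < size b)%N -> exists P, irreducible_poly P /\ P %| b.
Proof.
move=> b; elim: {b}(size b) {-2}b (leqnn (size b)) => [|n IH] b hb sb.
  by move: sb; rewrite leqNgt (leq_ltn_trans hb).
have [irr|nirr] := classic (irreducible_poly b); first by exists b; split.
have [q [q1 [qb nqb]]] : exists q : {poly F}, size q != 1%N /\ q %| b /\ ~~ (q %= b).
  apply: NNPP => H; apply: nirr; split => // q q1 qb.
  apply/negPn/negP => nq; apply: H; by exists q.
have b0 : b != 0 by rewrite -size_poly_gt0 (ltn_trans _ sb).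
have q0 : q != 0 by apply: contraNneq b0 => q0; move: qb; rewrite q0 dvd0p.
have sq : (1 < size q)%N.
  by move: q1 q0; rewrite -size_poly_gt0; case: (size q) => [|[|]].
have sqb : (size q < size b)%N.
  rewrite ltn_neqAle dvdp_leq // andbT dvdp_size_eqp //.
have hq : (size q <= n)%N by rewrite -ltnS (leq_trans sqb).
have [P [irrP Pq]] := IH q hq sq.
by exists P; split => //; apply: dvdp_trans Pq qb.
Qed.

Lemma pdecomp (P : {poly F}) : (1 < size P)%N ->
  forall b, b != 0 -> exists j c, b = P ^+ j * c /\ ~~ (P %| c).
Proof.
move=> sP b; elim: {b}(size b) {-2}b (leqnn (size b)) => [|n IH] b hb b0.
  by move: hb; rewrite leqn0 size_poly_eq0 (negPf b0).
have [Pb|nPb] := boolP (P %| b); last by exists 0%N, b; rewrite expr0 mul1r.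
have P0 : P != 0 by rewrite -size_poly_gt0 (ltn_trans _ sP).
have bE := divpK Pb.
set b1 := b %/ P in bE *.
have b10 : b1 != 0 by apply: contraNneq b0 => h; rewrite -bE h mul0r.
have : (size b1 <= n)%N.
  have : (size b1 < size b)%N.
    rewrite -bE size_mul //.
    move: sP; rewrite -subn1; move: (size b1) (size P) => x y; lia.
  by move=> h; rewrite -ltnS (leq_trans h hb).
move=> /IH /(_ b10) [j [c [Ej nc]]].
by exists j.+1, c; split => //; rewrite -bE Ej exprS; ring.
Qed.

Lemma irr_coprime (P c : {poly F}) : irreducible_poly P -> ~~ (P %| c) -> coprimep P c.
Proof.
move=> irr nc; have [h|h] := irredp_XsubCP irr (dvdp_gcdl P c).
  by rewrite -gcdp_eqp1.
by move: nc; rewrite -(eqp_dvdl _ h) dvdp_gcdr.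
Qed.

Lemma irr_sep (P : {poly F}) : irreducible_poly P -> coprimep P P^`().
Proof.
move=> irr; have [h|h] := irredp_XsubCP irr (dvdp_gcdl P P^`()).
  by rewrite -gcdp_eqp1.
have d0 := deriv_neq0 irr.1.
have := dvdp_gcdr P P^`(); rewrite (eqp_dvdl _ h) => /(dvdp_leq d0).
by rewrite leqNgt lt_size_deriv // irredp_neq0.
Qed.

Lemma sqf : forall b : {poly F}, b != 0 ->
  exists Q, [/\ Q != 0, coprimep Q Q^`(), Q %| b & exists m, b %| Q ^+ m].
Proof.
move=> b; elim: {b}(size b) {-2}b (leqnn (size b)) => [|n IH] b hb b0.
  by move: hb; rewrite leqn0 size_poly_eq0 (negPf b0).
have [sb|sb] := leqP (size b) 1.
  exists 1; split; rewrite ?oner_neq0 ?dvd1p //.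
    by rewrite derivC coprimep_sym coprime0p eqpxx.
  exists 0%N; rewrite expr0 dvdp1 eqn_leq sb size_poly_gt0 //.
have [P [irrP Pb]] := irr_factor sb.
have sP := irrP.1; have P0 := irredp_neq0 irrP.
have [j [c [Eb nPc]]] := pdecomp sP b0.
have c0 : c != 0 by apply: contraNneq b0 => h; rewrite Eb h mulr0.
have j0 : j != 0%N.
  by apply: contraNneq nPc => j0; move: Pb; rewrite Eb j0 expr0 mul1r.
have hPj : (1 < size (P ^+ j)%R)%N.
  case: j j0 {Eb} => // j _; rewrite exprS size_mul ?expf_neq0 //.
  have : (0 < size (P ^+ j)%R)%N by rewrite size_poly_gt0 expf_neq0.
  move: sP; rewrite -!subn1; move: (size P) (size (P ^+ j)%R) => x y; lia.
have : (size c <= n)%N.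
  move: hb; rewrite Eb size_mul ?expf_neq0 //.
  move: hPj; rewrite -!subn1; move: (size c) (size (P ^+ j)%R) => x y; lia.
move=> /IH /(_ c0) [Qc [Qc0 cQc Qcc [m cm]]].
have PQc : coprimep P Qc := coprimep_dvdl Qcc (irr_coprime irrP nPc).
exists (P * Qc); split.
- by rewrite mulf_neq0.
- rewrite derivM coprimepMl; apply/andP; split.
    by rewrite addrC (mulrC P) coprimep_addl_mul coprimepMr irr_sep // PQc.
  by rewrite coprimep_addl_mul coprimepMr cQc andbT coprimep_sym.
- rewrite Eb; apply: dvdp_mul => //; case: j j0 {Eb hPj} => // j _.
  by rewrite exprS dvdp_mulr.
- exists (maxn j m); rewrite Eb exprMn; apply: dvdp_mul.
    by apply: dvdp_exp2l; rewrite leq_maxl.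
  by apply: (dvdp_trans cm); apply: dvdp_exp2l; rewrite leq_maxr.
Qed.

Lemma lindep (d : nat) (r : nat -> {poly F}) : (forall k, size (r k) <= d)%N ->
  exists c : nat -> F, (exists k, (k < d.+1)%N /\ c k != 0) /\ \sum_(k < d.+1) c k *: r k = 0.
Proof.
move=> sr.
pose A : 'M[F]_(d.+1, d) := \matrix_(k < d.+1, i < d) (r k)`_i.
have rk : (0 < \rank (kermx A))%N.
  by rewrite mxrank_ker subn_gt0 ltnS rank_leq_col.
have [i0 hi0] : exists i0, row i0 (kermx A) != 0.
  apply: NNPP => H; move: rk; rewrite lt0n mxrank_eq0 => /negP; apply.
  apply/eqP/row_matrixP => i; rewrite row0; apply/eqP/negPn/negP => hi; apply: H; by exists i.
set w := row i0 (kermx A).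
have wA : w *m A = 0 by rewrite /w -row_mul mulmx_ker row0.
exists (fun k => if (k < d.+1)%N then w 0 (inord k) else 0); split.
  have [j hj] : exists j, w 0 j != 0.
    apply: NNPP => H; move: hi0 => /negP; apply; apply/eqP/rowP => j; rewrite [RHS]mxE.
    by apply/eqP/negPn/negP => hj; apply: H; exists j.
  exists j; rewrite ltn_ord inord_val; split => //.
apply/polyP => i; rewrite coef0 coef_sum.
under eq_bigr do rewrite ltn_ord inord_val coefZ.
have [id|di] := ltnP i d.
  have := congr1 (fun N : 'M[F]_(1, d) => N 0 (Ordinal id)) wA; rewrite !mxE => h; rewrite -[RHS]h.
  apply: eq_bigr => k _; by rewrite /A !mxE.
by apply: big1 => k _; rewrite nth_default ?mulr0 // (leq_trans (sr k)).
Qed.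

End Sqf.


Section Ev.
Variables (F : fieldType) (dF : F -> F) (M : fieldType) (dl pt : M -> M).
Hypothesis charM : [pchar M] =i pred0.
Hypotheses (derdl : is_derivation dl) (derpt : is_derivation pt).
Variable iota : {rmorphism F -> M}.
Hypotheses (dl_F : forall c, dl (iota c) = 0) (pt_F : forall c, pt (iota c) = iota (dF c)).
Variable x : M.
Hypotheses (dl_x : dl x = 1) (pt_x : pt x = 0).
Hypothesis x_transc : forall q : {poly F}, q != 0 -> (map_poly iota q).[x] != 0.

Definition Kf := gen_field (fun w : M => (exists c, w = iota c) \/ w = x).
Definition ev (q : {poly F}) := (map_poly iota q).[x].

Lemma evD a b : ev (a + b) = ev a + ev b. Proof. by rewrite /ev rmorphD hornerD. Qed.
Lemma evM a b : ev (a * b) = ev a * ev b. Proof. by rewrite /ev rmorphM hornerM. Qed.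
Lemma evN a : ev (- a) = - ev a. Proof. by rewrite /ev rmorphN hornerN. Qed.
Lemma evB a b : ev (a - b) = ev a - ev b. Proof. by rewrite evD evN. Qed.
Lemma evC c : ev c%:P = iota c. Proof. by rewrite /ev map_polyC hornerC. Qed.
Lemma ev1 : ev 1 = 1. Proof. by rewrite -polyC1 evC rmorph1. Qed.
Lemma ev0 : ev 0 = 0. Proof. by rewrite -polyC0 evC rmorph0. Qed.
Lemma evZ c a : ev (c *: a) = iota c * ev a. Proof. by rewrite -mul_polyC evM evC. Qed.
Lemma evX n a : ev (a ^+ n) = ev a ^+ n.
Proof. elim: n => [|n IH]; first by rewrite !expr0 ev1. by rewrite !exprS evM IH. Qed.
Lemma evMXC a c : ev (a * 'X + c%:P) = ev a * x + iota c.
Proof. by rewrite /ev rmorphD rmorphM /= map_polyX map_polyC hornerMXaddC. Qed.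
Lemma ev_sum (I : Type) (r : seq I) (P : pred I) (f : I -> {poly F}) :
  ev (\sum_(i <- r | P i) f i) = \sum_(i <- r | P i) ev (f i).
Proof.
elim: r => [|i r IH]; first by rewrite !big_nil ev0.
by rewrite !big_cons; case: (P i); rewrite ?evD IH.
Qed.

Lemma ev_neq0 q : q != 0 -> ev q != 0. Proof. exact: x_transc. Qed.

Lemma K_iota c : Kf (iota c). Proof. by apply: gf_base; left; exists c. Qed.
Lemma K_x : Kf x. Proof. by apply: gf_base; right. Qed.

Lemma K_ev q : Kf (ev q).
Proof.
elim/poly_ind: q => [|q c IH]; first by rewrite ev0; apply: gf0.
rewrite evMXC; apply: gf_add; [apply: gf_mul => //; exact: K_x | exact: K_iota].
Qed.

Lemma K_dl a : Kf a -> Kf (dl a).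
Proof.
apply: gf_d => // z [[c ->]|->]; first by rewrite dl_F; exact: gf0.
by rewrite dl_x; exact: gf_one.
Qed.

Lemma K_pt a : Kf a -> Kf (pt a).
Proof.
apply: gf_d => // z [[c ->]|->]; first by rewrite pt_F; exact: K_iota.
by rewrite pt_x; exact: gf0.
Qed.

Lemma dl_ev q : dl (ev q) = ev q^`().
Proof.
elim/poly_ind: q => [|q c IH]; first by rewrite ev0 deriv0 ev0 (d0 derdl).
by rewrite derivMXaddC evMXC (dD derdl) (dM derdl) dl_F dl_x IH evD evM /ev map_polyX hornerX; ring.
Qed.

Lemma pt_ev q : exists q', pt (ev q) = ev q'.
Proof.
elim/poly_ind: q => [|q c [q' IH]]; first by exists 0; rewrite ev0 (d0 derpt).
exists (q' * 'X + (dF c)%:P).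
by rewrite !evMXC (dD derpt) (dM derpt) pt_F pt_x IH; ring.
Qed.

Lemma Kfrac z : Kf z -> exists a b, b != 0 /\ z = ev a / ev b.
Proof.
elim=> {z}.
- move=> z [[c ->]|->].
    by exists c%:P, 1; rewrite oner_neq0 evC ev1 divr1.
  by exists 'X, 1; rewrite oner_neq0 ev1 divr1 /ev map_polyX hornerX.
- by exists 1, 1; rewrite oner_neq0 ev1 divr1.
- move=> _ _ _ [a [b [b0 ->]]] _ [a' [b' [b0' ->]]].
  exists (a * b' + a' * b), (b * b'); rewrite mulf_neq0 //; split => //.
  rewrite evD !evM; have := ev_neq0 b0; have := ev_neq0 b0'.
  move: (ev b) (ev b') => B B' hB hB'; field; by rewrite hB hB'.
- move=> _ _ [a [b [b0 ->]]]; exists (- a), b; split => //.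
  by rewrite evN mulNr.
- move=> _ _ _ [a [b [b0 ->]]] _ [a' [b' [b0' ->]]].
  exists (a * a'), (b * b'); rewrite mulf_neq0 //; split => //.
  by rewrite !evM invfM; ring.
- move=> _ _ [a [b [b0 ->]]].
  have [->|a0] := eqVneq a 0.
    by exists 0, 1; rewrite oner_neq0 ev0 !mul0r invr0.
  by exists b, a; split => //; rewrite invfM invrK mulrC.
Qed.

Definition exact (z : M) := exists g, Kf g /\ z = dl g.

Lemma exact0 : exact 0. Proof. by exists 0; rewrite (d0 derdl); split => //; apply: gf0. Qed.
Lemma exactD a b : exact a -> exact b -> exact (a + b).
Proof. move=> [g [Kg ->]] [h [Kh ->]]; exists (g + h); rewrite (dD derdl); split => //; exact: gf_add. Qed.
Lemma exactN a : exact a -> exact (- a).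
Proof. move=> [g [Kg ->]]; exists (- g); rewrite (dN derdl); split => //; exact: gf_opp. Qed.
Lemma exactZ c a : exact a -> exact (iota c * a).
Proof.
move=> [g [Kg ->]]; exists (iota c * g); rewrite (dM derdl) dl_F mul0r add0r; split => //.
apply: gf_mul => //; exact: K_iota.
Qed.
Lemma exact_dl g : Kf g -> exact (dl g). Proof. by move=> Kg; exists g. Qed.
Lemma exact_sum (I : Type) (r : seq I) (P : pred I) (f : I -> M) :
  (forall i, P i -> exact (f i)) -> exact (\sum_(i <- r | P i) f i).
Proof. move=> H; apply: big_ind => //; [exact: exact0 | exact: exactD]. Qed.

Lemma natM_neq0 n : (n.+1%:R : M) != 0.
Proof. by move: charM => /pcharf0P ->. Qed.

Lemma exact_ev a : exact (ev a).
Proof.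
rewrite /ev horner_coef size_map_poly; apply: exact_sum => i _.
rewrite coef_map /=.
have -> : iota a`_i * x ^+ i = iota a`_i * dl (x ^+ i.+1 * i.+1%:R^-1).
  rewrite (dM derdl) (dX derdl) dl_x (dnatV derdl) mulr0 addr0 mulr1.
  have := natM_neq0 i; move: (i.+1%:R : M) => k k0; field; exact: k0.
apply: exactZ; apply: exact_dl; apply: gf_mul; first by apply: gf_exp; exact: K_x.
apply: gf_inv; exact: gf_natr.
Qed.

Lemma hermite (Q : {poly F}) : Q != 0 -> coprimep Q Q^`() ->
  forall m a, exists r : {poly F}, (size r < size Q)%N /\ exact (ev a / ev Q ^+ m - ev r / ev Q).
Proof.
move=> Q0 cQ m; have EQ0 := ev_neq0 Q0.
elim: m => [|m IH] a.
  exists 0; rewrite size_poly0 size_poly_gt0; split => //.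
  by rewrite expr0 divr1 ev0 mul0r subr0; apply: exact_ev.
case: m IH => [|m] IH.
  exists (a %% Q); rewrite ltn_modp; split => //.
  rewrite {1}(divp_eq a Q) evD evM expr1.
  have -> : (ev (a %/ Q) * ev Q + ev (a %% Q)) / ev Q - ev (a %% Q) / ev Q = ev (a %/ Q).
    by field.
  exact: exact_ev.
have [[s t] /= Est] := Bezout_eq1_coprimepP _ _ cQ.
set T := a * t.
set a' := a * s + (m.+1%:R^-1 : F) *: T^`().
have [r [sr er]] := IH a'.
exists r; split => //.
set g := ev T / ev Q ^+ m.+1.
have Kg : Kf g by apply: gf_div; [exact: K_ev | apply: gf_exp; exact: K_ev].
have dg := dquot derdl (ev T) m EQ0.
rewrite -/g !dl_ev in dg.
have ea : ev a = ev (a * s) * ev Q + ev T * ev Q^`().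
  by rewrite -evM -evM -evD /T; congr ev; rewrite -[a in LHS]mulr1 -Est; ring.
have ea' : ev a' = ev (a * s) + m.+1%:R^-1 * ev T^`().
  by rewrite /a' evD evZ fmorphV rmorph_nat.
have -> : ev a / ev Q ^+ m.+2 - ev r / ev Q =
   (ev a' / ev Q ^+ m.+1 - ev r / ev Q) + m.+1%:R^-1 * (- dl g).
  rewrite dg ea ea' evM.
  have := natM_neq0 m; move: (m.+1%:R : M) => k k0.
  rewrite !exprS; move: (ev Q ^+ m) (expf_neq0 m EQ0) => C C0.
  field; by rewrite ?k0 ?C0 ?EQ0.
apply: exactD => //.
have -> : (m.+1%:R^-1 : M) = iota (m.+1%:R^-1) by rewrite fmorphV rmorph_nat.
by apply: exactZ; apply: exactN; apply: exact_dl.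
Qed.

End Ev.


Section Main.
Variables (F : fieldType) (dF : F -> F).
Hypothesis charF : [pchar F] =i pred0.
Variables (M : fieldType) (dl pt : M -> M).
Hypothesis charM : [pchar M] =i pred0.
Hypotheses (derdl : is_derivation dl) (derpt : is_derivation pt).
Hypothesis comm : forall a, dl (pt a) = pt (dl a).
Variable iota : {rmorphism F -> M}.
Hypotheses (dl_F : forall c, dl (iota c) = 0) (pt_F : forall c, pt (iota c) = iota (dF c)).
Variable x : M.
Hypotheses (dl_x : dl x = 1) (pt_x : pt x = 0).
Hypothesis x_transc : forall q : {poly F}, q != 0 -> (map_poly iota q).[x] != 0.
Variable p : M.
Hypothesis p_in_K : Kf iota x p.
Hypothesis consts : forall m : M, dl m = 0 -> exists c, m = iota c.
Variable u : M.
Hypotheses (u0 : u != 0) (du : dl u = p * u).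

Local Notation K := (Kf iota x).
Local Notation ev := (ev iota x).
Local Notation exact := (exact dl iota x).

Lemma ptk_form (Q : {poly F}) a0 m0 : Q != 0 -> p = ev a0 / ev Q ^+ m0 ->
  forall k, exists a j, iter k pt p = ev a / ev Q ^+ j.
Proof.
move=> Q0 hp; elim=> [|k [a [j IH]]]; first by exists a0, m0.
have EQ0 := ev_neq0 x_transc Q0.
rewrite iterS IH.
have [a' ha'] := pt_ev derpt pt_F pt_x a.
have [Q1 hQ1] := pt_ev derpt pt_F pt_x Q.
case: j {IH} => [|j].
  by exists a', 0%N; rewrite !expr0 !divr1.
rewrite (dquot derpt _ _ EQ0) ha' hQ1.
exists (a' * Q - (a * Q1) *+ j.+1), j.+2.
rewrite evB (@evM _ _ iota x a' Q) /Submission.ev rmorphMn hornerMn rmorphM hornerM -mulr_natl; ring.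
Qed.


Lemma exists_rel : exists N (c : nat -> F), (exists k, (k < N)%N /\ c k != 0) /\
  exact (\sum_(k < N) iota (c k) * iter k.+1 pt p).
Proof.
have [a0 [b0 [b00 hp]]] := Kfrac x_transc p_in_K.
have [Q [Q0 cQ _ [m0 bQ]]] := sqf charF b00.
set h := Q ^+ m0 %/ b0.
have hb : h * b0 = Q ^+ m0 by rewrite divpK.
have Eb0 := ev_neq0 x_transc b00.
have hp' : p = ev (a0 * h) / ev Q ^+ m0.
  rewrite hp -(evX iota x) -hb !(@evM _ _ iota x).
  have : ev h != 0.
    apply: ev_neq0 => //; apply/eqP => h0; have := expf_neq0 m0 Q0.
    by rewrite -hb h0 mul0r eqxx.
  move: (ev h) => H H0; field; by rewrite H0 Eb0.
have H : forall k, exists r : {poly F}, (size r < size Q)%N /\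
    exact (iter k.+1 pt p - ev r / ev Q).
  move=> k; have [a [j ->]] := ptk_form Q0 hp' k.+1.
  have HH := hermite charM derdl dl_F dl_x x_transc Q0 cQ j a. exact: HH.
pose rf k := proj1_sig (constructive_indefinite_description _ (H k)).
have hrf k : (size (rf k) < size Q)%N /\ exact (iter k.+1 pt p - ev (rf k) / ev Q).
  exact: proj2_sig (constructive_indefinite_description _ (H k)).
have [c [[k [hk ck]] sc]] := lindep (fun k => ltnW (hrf k).1).
exists (size Q).+1, c; split; first by exists k.
have -> : \sum_(k < (size Q).+1) iota (c k) * iter k.+1 pt p =
   \sum_(k < (size Q).+1) iota (c k) * (iter k.+1 pt p - ev (rf k) / ev Q) +
   ev (\sum_(k < (size Q).+1) c k *: rf k) / ev Q.
  rewrite (ev_sum iota x) mulr_suml -big_split /=; apply: eq_bigr => i _.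
  by rewrite (evZ iota x); ring.
rewrite sc (ev0 iota x) mul0r addr0; apply: (exact_sum derdl) => i _.
by apply: (exactZ derdl dl_F); exact: (hrf i).2.
Qed.


Lemma trunc N (c : nat -> F) (f : nat -> M) : (exists k, (k < N)%N /\ c k != 0) ->
  K (\sum_(k < N) iota (c k) * f k) -> exists n, c n != 0 /\ K (\sum_(k < n.+1) iota (c k) * f k).
Proof.
elim: N => [|N IH] [k [hk ck]] KS; first by [].
have [cN|cN] := eqVneq (c N) 0; last by exists N.
apply: IH.
  exists k; split => //; move: hk; rewrite ltnS leq_eqVlt => /orP[/eqP ek|//].
  by move: ck; rewrite ek cN eqxx.
by move: KS; rewrite big_ord_recr /= cN rmorph0 mul0r addr0.
Qed.

Lemma dl_w : dl (pt u / u) = pt p.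
Proof.
rewrite (dM derdl) (dV derdl) comm du (dM derpt).
move: (pt u) (pt p) => a b; field; exact: u0.
Qed.

Lemma Kwsum : exists n (c : nat -> F), c n != 0 /\
  K (\sum_(k < n.+1) iota (c k) * iter k pt (pt u / u)).
Proof.
have [N [c [nz [g [Kg Eg]]]]] := exists_rel.
set E := \sum_(k < N) iota (c k) * iter k pt (pt u / u).
have dE : dl E = \sum_(k < N) iota (c k) * iter k.+1 pt p.
  rewrite /E (dsum derdl); apply: eq_bigr => k _.
  by rewrite (dM derdl) dl_F mul0r add0r (diter comm) dl_w iterSr.
have [c0 hc0] : exists c0, E - g = iota c0.
  by apply: consts; rewrite (dB derdl) dE Eg subrr.
have KE : K E.
  have -> : E = g + iota c0 by rewrite -hc0 addrC subrK.
  by apply: gf_add => //; apply: K_iota.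
have [n [cn Kn]] := trunc nz KE.
by exists n, c.
Qed.


Local Notation S k := (fun z => exists j, (j <= k)%N /\ z = iter j pt u).

Lemma S_mono k a : S k a -> S k.+1 a.
Proof. by move=> [j [hj ->]]; exists j; split => //; apply: leqW. Qed.

Lemma S_t j k : (j <= k)%N -> polyin K (S k) (iter j pt u).
Proof. by move=> hj; apply: pv; exists j. Qed.

Lemma S_u k : polyin K (S k) u. Proof. exact: (@S_t 0 k (leq0n k)). Qed.
Lemma S_pu k : polyin K (S k.+1) (pt u). Proof. exact: (@S_t 1 k.+1 isT). Qed.

Lemma polyin_pt k z : polyin K (S k) z -> polyin K (S k.+1) (pt z).
Proof.
apply: (polyin_d derpt).
- by move=> a; apply: (K_pt derpt pt_F pt_x).
- by move=> a [j [hj ->]]; apply: pv; exists j.+1.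
- exact: S_mono.
Qed.

Lemma Wk k : polyin K (S k) (u ^+ k.+1 * iter k pt (pt u / u) - u ^+ k * iter k.+1 pt u).
Proof.
elim: k => [|k IH].
  rewrite expr1 expr0 mul1r /=.
  have -> : u * (pt u / u) - pt u = 0 by field.
  by apply: pk; apply: gf0.
set D := u ^+ k.+1 * iter k pt (pt u / u) - u ^+ k * iter k.+1 pt u in IH.
have -> : u ^+ k.+2 * iter k.+1 pt (pt u / u) - u ^+ k.+1 * iter k.+2 pt u =
   u * pt D + u * pt (u ^+ k) * iter k.+1 pt u + (- k.+1%:R) * pt u * (D + u ^+ k * iter k.+1 pt u).
  rewrite /D (dB derpt) !(dM derpt) (dX derpt) /=.
  move: (pt (u ^+ k)) (iter k pt (pt u / u)) (iter k pt u) => P W T.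
  rewrite !exprS; ring.
have Sk1 : forall a, polyin K (S k) a -> polyin K (S k.+1) a.
  by apply: polyin_mono; apply: S_mono.
apply: padd; first apply: padd.
- apply: pmul; first exact: S_u.
  exact: polyin_pt.
- apply: pmul; last exact: (@S_t k.+1 k.+1 (leqnn _)).
  apply: pmul; first exact: S_u.
  apply: polyin_pt; apply: polyin_exp; first exact: gf_one.
  exact: S_u.
- apply: pmul; first apply: pmul.
  + by apply: pk; apply: gf_opp; apply: gf_natr.
  + exact: S_pu.
  + apply: padd; first exact: Sk1.
    apply: pmul; last exact: (@S_t k.+1 k.+1 (leqnn _)).
    apply: polyin_exp; first exact: gf_one.
    exact: S_u.
Qed.


Lemma relation : exists n (c : nat -> F) B, c n != 0 /\ polyin K (S n) B /\
  iota (c n) * u ^+ n * iter n.+1 pt u + B = 0.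
Proof.
have [n [c [cn KE]]] := Kwsum.
set E := \sum_(k < n.+1) iota (c k) * iter k pt (pt u / u) in KE.
pose D k := u ^+ k.+1 * iter k pt (pt u / u) - u ^+ k * iter k.+1 pt u.
set Y := \sum_(k < n.+1) iota (c k) * u ^+ (n - k) * D k +
         \sum_(k < n) iota (c k) * u ^+ n * iter k.+1 pt u.
have e1 : \sum_(k < n.+1) iota (c k) * u ^+ (n - k) * D k =
    u ^+ n.+1 * E - \sum_(k < n.+1) iota (c k) * u ^+ n * iter k.+1 pt u.
  rewrite /E mulr_sumr -sumrB; apply: eq_bigr => k _.
  have hk : (k <= n)%N by rewrite -ltnS ltn_ord.
  have E1 : u ^+ n.+1 = u ^+ (n - k) * u ^+ k.+1 by rewrite -exprD addnS subnK.
  have E2 : u ^+ n = u ^+ (n - k) * u ^+ k by rewrite -exprD subnK.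
  rewrite /D E1 E2; ring.
exists n, c, (Y - u ^+ n.+1 * E); split => //; split; last first.
  rewrite /Y e1 big_ord_recr /=; ring.
have Kn : forall k a, (k <= n)%N -> polyin K (S k) a -> polyin K (S n) a.
  move=> k a hk; apply: polyin_mono => z [j [hj ->]]; exists j; split => //.
  exact: leq_trans hk.
have K0 : K 0 by apply: gf0.
apply: padd; first apply: padd.
- apply: polyin_sum => [|k _]; first exact: K0.
  apply: pmul; first apply: pmul.
  + by apply: pk; apply: K_iota.
  + by apply: polyin_exp; [apply: gf_one | apply: S_u].
  + by apply: (Kn k); [rewrite -ltnS ltn_ord | apply: Wk].
- apply: polyin_sum => [|k _]; first exact: K0.
  apply: pmul; first apply: pmul.
  + by apply: pk; apply: K_iota.
  + by apply: polyin_exp; [apply: gf_one | apply: S_u].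
  + by apply: (Kn k.+1); [exact: ltn_ord | exact: (@S_t k.+1 k.+1 (leqnn _))].
- rewrite -mulN1r; apply: pmul; first by apply: pk; apply: gf_opp; apply: gf_one.
  apply: pmul; last exact: pk.
  by apply: polyin_exp; [apply: gf_one | apply: S_u].
Qed.


Lemma mono_head (a : M) (v : seq M) k : monomial (a :: v) (k :: nseq (size v) 0%N) = a ^+ k.
Proof.
rewrite monomialE /= big_nat_recl //= big1_seq ?mulr1 // => i; rewrite mem_iota => /andP[_ /andP[_ hi]].
by rewrite nth_nseq; case: ifP.
Qed.

Lemma not_dtr : ~ d_transcendental pt K u.
Proof.
move=> dtr; have [n [c [B [cn [PB rel]]]]] := relation.
set v0 := [seq iter k pt u | k <- seq.iota 0 n.+1].
set t := iter n.+1 pt u.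
have ind := dtr n.+1.
have ev0 : [seq iter k pt u | k <- seq.iota 0 n.+2] = rcons v0 t.
  by rewrite -addn1 seq.iotaD map_cat cats1.
rewrite ev0 in ind.
have sv0 : size v0 = n.+1 by rewrite size_map size_iota.
have K0 : K 0 by apply: gf0.
have Sv : forall s, S n s -> s \in v0.
  by move=> s [j [hj ->]]; apply/mapP; exists j => //; rewrite mem_iota leq0n add0n ltnS hj.
have [P [hP EB]] := @polyin_list _ K (S n) v0 (gf_one _) (fun a b => @gf_mul _ _ a b) Sv B PB.
have v0E : v0 = u :: behead v0 by [].
have tE : t = iter n.+1 pt u by [].
rewrite -tE in rel.
clearbody v0 t.
set e := rcons (n :: nseq n 0%N) 1%N.
set PP := (iota (c n), e) :: [seq (m.1, rcons m.2 0%N) | m <- P].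
have hPP : forall m, m \in PP -> K m.1 /\ size m.2 = size (rcons v0 t).
  move=> m; rewrite inE => /orP[/eqP -> | /mapP [m' m'P ->]] /=.
    by split; [apply: K_iota | rewrite /e !size_rcons /= size_nseq sv0].
  by have [Km' sm'] := hP m' m'P; split => //; rewrite !size_rcons sm'.
have sPP : \sum_(m <- PP) m.1 * monomial (rcons v0 t) m.2 = 0.
  rewrite big_cons big_map /= /e monomial_rcons; last by rewrite /= size_nseq sv0.
  have -> : n :: nseq n 0%N = n :: nseq (size (behead v0)) 0%N by rewrite size_behead sv0.
  rewrite [in monomial v0 _]v0E mono_head expr1 -[RHS]rel mulrA; congr (_ + _). 
  rewrite EB; apply: eq_big_seq => m mP; rewrite monomial_rcons ?expr0 ?mulr1 //.
  exact: (hP m mP).2.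
have := @alg_indep_coef _ K (rcons v0 t) K0 (fun a b => @gf_add _ _ a b) ind PP hPP sPP e.
rewrite big_cons eqxx big_map /= big1 ?addr0; last first.
  by move=> m; rewrite /e eqseq_rcons andbF.
by move/eqP; rewrite fmorph_eq0 (negPf cn).
Qed.


Lemma fin_gen : exists s : seq M, forall m,
  gen_dfield dl pt (fun z => K z \/ z = u) m <-> gen_field (fun z => K z \/ z \in s) m.
Proof.
have [n [c [B [cn [PB rel]]]]] := relation.
exists [seq iter k pt u | k <- seq.iota 0 n.+1].
set s := [seq iter k pt u | k <- seq.iota 0 n.+1].
set Fn := gen_field (fun z => K z \/ z \in s).
have ts : forall j, (j <= n)%N -> Fn (iter j pt u).
  move=> j hj; apply: gf_base; right; apply/mapP; exists j => //.
  by rewrite mem_iota leq0n add0n ltnS hj.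
have KF : forall a, K a -> Fn a by move=> a Ka; apply: gf_base; left.
have tn1 : Fn (iter n.+1 pt u).
  have ic : iota (c n) != 0 by rewrite fmorph_eq0.
  have un : u ^+ n != 0 by rewrite expf_neq0.
  have -> : iter n.+1 pt u = - B / (iota (c n) * u ^+ n).
    move: rel; move: (iota (c n)) (u ^+ n) (iter n.+1 pt u) ic un => a b T a0 b0 rel.
    have -> : B = - (a * b * T) by apply/eqP; rewrite -addr_eq0 addrC rel.
    field; by rewrite a0 b0.
  apply: gf_div; first apply: gf_opp.
    apply: (polyin_gf KF _ PB) => z [j [hj ->]]; exact: ts.
  apply: gf_mul; [exact: KF (K_iota _ _ _) | apply: gf_exp; exact: (ts 0%N)].
have Fpt : forall a, Fn a -> Fn (pt a).
  apply: (gf_d derpt) => z [Kz | /mapP [j hj ->]].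
    by apply: KF; apply: (K_pt derpt pt_F pt_x).
  move: hj; rewrite mem_iota add0n ltnS => /andP[_]; rewrite leq_eqVlt => /orP[/eqP -> | hj].
    exact: tn1.
  exact: (ts j.+1 hj).
have Fit : forall j a, Fn a -> Fn (iter j pt a).
  by move=> j a Fa; elim: j => [|j IH] //=; apply: Fpt.
have Fdl : forall a, Fn a -> Fn (dl a).
  apply: (gf_d derdl) => z [Kz | /mapP [j hj ->]].
    by apply: KF; apply: (K_dl derdl dl_F dl_x).
  rewrite (diter comm) du; apply: Fit; apply: gf_mul.
    exact: KF.
  exact: (ts 0%N).
move=> m; split.
  elim=> {m}.
  - by move=> z [Kz| ->]; [exact: KF | exact: (ts 0%N)].
  - exact: gf_one.
  - by move=> a b _ ha _ hb; apply: gf_add.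
  - by move=> a _ ha; apply: gf_opp.
  - by move=> a b _ ha _ hb; apply: gf_mul.
  - by move=> a _ ha; apply: gf_inv.
  - by move=> a _ ha; apply: Fdl.
  - by move=> a _ ha; apply: Fpt.
elim=> {m}.
- move=> z [Kz | /mapP [j _ ->]]; first by apply: gd_base; left.
  elim: j => [|j IH] /=; first by apply: gd_base; right.
  exact: gd_d2.
- exact: gd_one.
- by move=> a b _ ha _ hb; apply: gd_add.
- by move=> a _ ha; apply: gd_opp.
- by move=> a b _ ha _ hb; apply: gd_mul.
- by move=> a _ ha; apply: gd_inv.
Qed.

End Main.


Theorem lemma3p1
  (F : fieldType) (dF : F -> F)
  (charF : [pchar F] =i pred0) (derF : is_derivation dF) (dcF : diff_closed dF)
  (M : fieldType) (dl pt : M -> M)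
  (charM : [pchar M] =i pred0)
  (derdl : is_derivation dl) (derpt : is_derivation pt)
  (comm : forall a, dl (pt a) = pt (dl a))
  (iota : {rmorphism F -> M})
  (dl_F : forall c, dl (iota c) = 0) (pt_F : forall c, pt (iota c) = iota (dF c))
  (x : M) (dl_x : dl x = 1) (pt_x : pt x = 0)
  (x_transc : forall q : {poly F}, q != 0 -> (map_poly iota q).[x] != 0)
  (p : M) (p_in_K : gen_field (fun z => (exists c, z = iota c) \/ z = x) p)
  (* M is a PPV-extension of K for delta^2 Y - p delta Y = 0 *)
  (y1 y2 : M)
  (sol1 : dl (dl y1) - p * dl y1 = 0) (sol2 : dl (dl y2) - p * dl y2 = 0)
  (lin_indep : forall c1 c2 : F, iota c1 * y1 + iota c2 * y2 = 0 -> c1 = 0 /\ c2 = 0)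
  (gen : forall m : M,
      gen_dfield dl pt
        (fun z => gen_field (fun w => (exists c, w = iota c) \/ w = x) z
                  \/ z = y1 \/ z = y2) m)
  (consts : forall m : M, dl m = 0 -> exists c, m = iota c)
  (eta : M) (eta_sol : dl (dl eta) = p * dl eta) (eta_nc : dl eta != 0) :
  let K := gen_field (fun w => (exists c, w = iota c) \/ w = x) in
  let L := gen_dfield dl pt (fun z => K z \/ z = dl eta) in
  ~ d_transcendental pt K (dl eta) /\
  (exists s : seq M, forall m, L m <-> gen_field (fun z => K z \/ z \in s) m).
Proof.
move=> K L; split.
  exact: (not_dtr charF charM derdl derpt comm dl_F pt_F dl_x pt_x x_transc p_in_K consts eta_nc eta_sol).
exact: (fin_gen charF charM derdl derpt comm dl_F pt_F dl_x pt_x x_transc p_in_K consts eta_nc eta_sol).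
Qed.
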